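(* Let $S: x=x(u,v)$, $(u,v)\in\mathcal D$, be a strongly regular Weingarten surface parameterized by principal parameters, with $\nu_1=f(\nu)$, $\nu_2=g(\nu)$, $\nu=\nu(u,v)$. Let $\Phi$ be an antiderivative of $f'/(f-g)$ and $\Psi$ an antiderivative of $g'/(g-f)$ on $\mathcal I$. Then the function $\lambda=\ln\{\sqrt E\,\exp(\Phi(\nu(u,v)))\}$ does not depend on $v$, and the function $\mu=\ln\{\sqrt G\,\exp(\Psi(\nu(u,v)))\}$ does not depend on $u$.
   Context: $E,F,G$ and $L,M,N$ are the coefficients of the first and second fundamental forms; principal parameters means $F=M=0$ and no umbilical points. Principal curvatures: $\nu_1=L/E$, $\nu_2=N/G$; principal geodesic curvatures: $\gamma_1=-\frac{E_v}{2E\sqrt G}$, $\gamma_2=\frac{G_u}{2G\sqrt E}$. $S$ is strongly regular if $(\nu_1-\nu_2)\gamma_1\gamma_2\neq0$ on $\mathcal D$, with the convention $\nu_1-\nu_2>0$. A strongly regular surface is Weingarten if there exist differentiable functions $f(\nu),g(\nu)$, $\nu\in\mathcal I\subseteq\mathbb R$, with $f-g>0$, $f'g'\neq0$, and a differentiable function $\nu(u,v)\in\mathcal I$ with $\nu_u\nu_v\neq0$ on $\mathcal D$, such that $\nu_1=f(\nu)$, $\nu_2=g(\nu)$. *)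

(* Defs.v *)
From Stdlib Require Import Reals.
From Coquelicot Require Import Coquelicot.
Open Scope R_scope.

Definition pu (f : R -> R -> R) : R -> R -> R := fun u v => Derive (fun t => f t v) u.
Definition pv (f : R -> R -> R) : R -> R -> R := fun u v => Derive (fun t => f u t) v.

Definition open2 (D : R -> R -> Prop) : Prop :=
  forall u v, D u v -> exists eps : R, 0 < eps /\
    forall a b, Rabs (a - u) < eps -> Rabs (b - v) < eps -> D a b.

Definition open_interval_R (I : R -> Prop) : Prop :=
  (exists t, I t) /\
  (forall t, I t -> exists eps : R, 0 < eps /\ forall s, Rabs (s - t) < eps -> I s) /\
  (forall a b c, I a -> I c -> a <= b -> b <= c -> I b).

Fixpoint Ck (k : nat) (D : R -> R -> Prop) (f : R -> R -> R) : Prop :=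
  (forall u v, D u v -> continuous (fun p : R * R => f (fst p) (snd p)) (u, v)) /\
  match k with
  | O => True
  | S k' =>
      (forall u v, D u v -> ex_derive (fun t => f t v) u /\ ex_derive (fun t => f u t) v) /\
      Ck k' D (pu f) /\ Ck k' D (pv f)
  end.

Definition smooth2 (D : R -> R -> Prop) (f : R -> R -> R) : Prop :=
  forall k, Ck k D f.

Definition vec3 := (R * R * R)%type.
Definition vx (a : vec3) : R := fst (fst a).
Definition vy (a : vec3) : R := snd (fst a).
Definition vz (a : vec3) : R := snd a.
Definition dot (a b : vec3) : R := vx a * vx b + vy a * vy b + vz a * vz b.
Definition cross (a b : vec3) : vec3 :=
  (vy a * vz b - vz a * vy b, vz a * vx b - vx a * vz b, vx a * vy b - vy a * vx b).
Definition vnorm (a : vec3) : R := sqrt (dot a a).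
Definition vscale (c : R) (a : vec3) : vec3 := (c * vx a, c * vy a, c * vz a).

Definition surf := R -> R -> vec3.
Definition comp1 (x : surf) : R -> R -> R := fun u v => vx (x u v).
Definition comp2 (x : surf) : R -> R -> R := fun u v => vy (x u v).
Definition comp3 (x : surf) : R -> R -> R := fun u v => vz (x u v).
Definition Su (x : surf) : surf := fun u v =>
  (pu (comp1 x) u v, pu (comp2 x) u v, pu (comp3 x) u v).
Definition Sv (x : surf) : surf := fun u v =>
  (pv (comp1 x) u v, pv (comp2 x) u v, pv (comp3 x) u v).

Definition smooth_surf (D : R -> R -> Prop) (x : surf) : Prop :=
  smooth2 D (comp1 x) /\ smooth2 D (comp2 x) /\ smooth2 D (comp3 x).

Definition regular_surf (D : R -> R -> Prop) (x : surf) : Prop :=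
  forall u v, D u v -> vnorm (cross (Su x u v) (Sv x u v)) <> 0.

Definition unormal (x : surf) : surf := fun u v =>
  vscale (/ vnorm (cross (Su x u v) (Sv x u v))) (cross (Su x u v) (Sv x u v)).

Definition fE (x : surf) u v := dot (Su x u v) (Su x u v).
Definition fF (x : surf) u v := dot (Su x u v) (Sv x u v).
Definition fG (x : surf) u v := dot (Sv x u v) (Sv x u v).
Definition fL (x : surf) u v := dot (Su (Su x) u v) (unormal x u v).
Definition fM (x : surf) u v := dot (Sv (Su x) u v) (unormal x u v).
Definition fN (x : surf) u v := dot (Sv (Sv x) u v) (unormal x u v).

Definition nu1 (x : surf) u v := fL x u v / fE x u v.
Definition nu2 (x : surf) u v := fN x u v / fG x u v.
Definition gamma1 (x : surf) u v := - pv (fE x) u v / (2 * fE x u v * sqrt (fG x u v)).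
Definition gamma2 (x : surf) u v := pu (fG x) u v / (2 * fG x u v * sqrt (fE x u v)).

Definition principal_params (D : R -> R -> Prop) (x : surf) : Prop :=
  forall u v, D u v -> fF x u v = 0 /\ fM x u v = 0 /\ nu1 x u v <> nu2 x u v.

(** Strongly regular (with the convention nu1 - nu2 > 0). *)
Definition strongly_regular (D : R -> R -> Prop) (x : surf) : Prop :=
  forall u v, D u v ->
    (nu1 x u v - nu2 x u v) * gamma1 x u v * gamma2 x u v <> 0 /\
    nu1 x u v - nu2 x u v > 0.

Definition weingarten_data (D : R -> R -> Prop) (I : R -> Prop) (x : surf)
    (f g : R -> R) (nu : R -> R -> R) : Prop :=
  (forall t, I t -> ex_derive f t /\ ex_derive g t /\
                    f t - g t > 0 /\ Derive f t * Derive g t <> 0) /\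
  (forall u v, D u v ->
     I (nu u v) /\
     ex_derive (fun t => nu t v) u /\ ex_derive (fun t => nu u t) v /\
     pu nu u v * pv nu u v <> 0 /\
     nu1 x u v = f (nu u v) /\ nu2 x u v = g (nu u v)).

(* Main.v *)
Require Import Defs.
From Stdlib Require Import Reals Lra.
From Coquelicot Require Import Coquelicot.
Open Scope R_scope.

Lemma d_mult (f g : R -> R) x df dg : is_derive f x df -> is_derive g x dg ->
  is_derive (fun t => f t * g t) x (df * g x + f x * dg).
Proof. intros H1 H2. exact (is_derive_mult f g x df dg H1 H2 Rmult_comm). Qed.
Lemma d_plus (f g : R -> R) x df dg : is_derive f x df -> is_derive g x dg ->
  is_derive (fun t => f t + g t) x (df + dg).
Proof. intros H1 H2. exact (is_derive_plus f g x df dg H1 H2). Qed.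
Lemma d_minus (f g : R -> R) x df dg : is_derive f x df -> is_derive g x dg ->
  is_derive (fun t => f t - g t) x (df - dg).
Proof. intros H1 H2. exact (is_derive_minus f g x df dg H1 H2). Qed.
Lemma d_comp (f g : R -> R) x df dg : is_derive f (g x) df -> is_derive g x dg ->
  is_derive (fun t => f (g t)) x (dg * df).
Proof. intros H1 H2. exact (is_derive_comp f g x df dg H1 H2). Qed.
Lemma d_val (f : R -> R) (x l l' : R) : is_derive f x l -> l = l' -> is_derive f x l'.
Proof. intros H ->; exact H. Qed.
Lemma d_zero_loc (h : R -> R) t l c : is_derive h t l -> locally t (fun s => h s = c) -> l = 0.
Proof.
  intros H Hl.
  assert (H2 : is_derive (fun _ : R => c) t 0).
  { exact (is_derive_const (V:=R_NormedModule) c t). }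
  assert (H3 : is_derive h t 0).
  { apply (is_derive_ext_loc (fun _ => c)); [|exact H2].
    revert Hl; apply filter_imp; intros s Hs; auto. }
  rewrite <- (is_derive_unique _ _ _ H), (is_derive_unique _ _ _ H3); reflexivity.
Qed.

Definition vder (p : R -> vec3) (t : R) (d : vec3) :=
  is_derive (fun s => vx (p s)) t (vx d) /\ is_derive (fun s => vy (p s)) t (vy d) /\
  is_derive (fun s => vz (p s)) t (vz d).

Lemma vder_dot (p q : R -> vec3) (t : R) dp dq : vder p t dp -> vder q t dq ->
  is_derive (fun s => dot (p s) (q s)) t (dot dp (q t) + dot (p t) dq).
Proof.
  intros [H1 [H2 H3]] [G1 [G2 G3]]. unfold dot.
  eapply d_val.
  - apply d_plus; [apply d_plus|]; apply d_mult; eauto.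
  - cbv beta; ring.
Qed.

Lemma dot_ge0 a : 0 <= dot a a.
Proof. unfold dot. nra. Qed.

Lemma dot_pos a : vnorm a <> 0 -> 0 < dot a a.
Proof.
  unfold vnorm; intros H. destruct (Rle_lt_dec (dot a a) 0) as [h|h]; auto.
  exfalso; apply H, sqrt_neg_0, h.
Qed.

Definition un (a b : vec3) : vec3 := vscale (/ vnorm (cross a b)) (cross a b).

Lemma vder_cross a b t da db : vder a t da -> vder b t db ->
  exists dc, vder (fun s => cross (a s) (b s)) t dc.
Proof.
  intros [H1 [H2 H3]] [G1 [G2 G3]].
  refine (ex_intro _ (_, _, _) _). unfold vder. simpl.
  split; [|split]; apply d_minus; apply d_mult; eauto.
Qed.

Lemma vder_unit c t dc : vder c t dc -> vnorm (c t) <> 0 ->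
  exists dn, vder (fun s => vscale (/ vnorm (c s)) (c s)) t dn.
Proof.
  intros Hc Hn.
  assert (Hp := dot_pos _ Hn).
  assert (Hd := vder_dot _ _ _ _ _ Hc Hc).
  assert (Hs := is_derive_sqrt _ _ _ Hd Hp).
  assert (Hi := is_derive_inv _ _ _ Hs Hn).
  destruct Hc as [H1 [H2 H3]].
  refine (ex_intro _ (_, _, _) _). unfold vder, vscale. simpl.
  split; [|split]; apply d_mult; eauto.
Qed.

Lemma vder_un a b t da db : vder a t da -> vder b t db -> vnorm (cross (a t) (b t)) <> 0 ->
  exists dn, vder (fun s => un (a s) (b s)) t dn.
Proof.
  intros Ha Hb Hn. destruct (vder_cross _ _ _ _ _ Ha Hb) as [dc Hc].
  exact (vder_unit _ _ _ Hc Hn).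
Qed.

Lemma perp (p q w z : vec3) : vnorm (cross p q) <> 0 -> dot p q = 0 ->
  dot w (un p q) = 0 -> dot w p = 0 -> dot w z = dot w q / dot q q * dot q z.
Proof.
  intros Hn Hpq Hwn Hwp.
  assert (Hc := dot_pos _ Hn).
  assert (Hq : 0 < dot q q).
  { destruct (Rle_lt_dec (dot q q) 0) as [h|h]; auto. exfalso.
    assert (dot q q = 0) by (pose proof (dot_ge0 q); lra).
    destruct q as [[q1 q2] q3]; unfold dot, cross, vx, vy, vz in *; simpl in *.
    assert (q1 = 0) by nra. assert (q2 = 0) by nra. assert (q3 = 0) by nra.
    subst. lra. }
  assert (Hwc : dot w (cross p q) = 0).
  { unfold un in Hwn. unfold vnorm in *.
    set (c := cross p q) in *.
    assert (Hs : 0 < sqrt (dot c c)) by (apply sqrt_lt_R0; auto).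
    destruct c as [[c1 c2] c3]; destruct w as [[w1 w2] w3];
      unfold dot, vscale, vx, vy, vz in *; simpl in *.
    assert (Hk : / sqrt (c1 * c1 + c2 * c2 + c3 * c3) <> 0) by (apply Rinv_neq_0_compat; lra).
    apply (Rmult_eq_reg_l (/ sqrt (c1 * c1 + c2 * c2 + c3 * c3))); auto.
    set (s := / sqrt (c1 * c1 + c2 * c2 + c3 * c3)) in *.
    transitivity (w1 * (s * c1) + w2 * (s * c2) + w3 * (s * c3)); [ring | rewrite Hwn; ring]. }
  clear Hwn.
  set (k := dot w q / dot q q).
  destruct p as [[p1 p2] p3]; destruct q as [[q1 q2] q3]; destruct w as [[w1 w2] w3];
    destruct z as [[z1 z2] z3].
  unfold dot, cross, vx, vy, vz in *; simpl in *.
  set (a1 := w1 - k * q1). set (a2 := w2 - k * q2). set (a3 := w3 - k * q3).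
  assert (Eap : a1 * p1 + a2 * p2 + a3 * p3 = 0).
  { unfold a1, a2, a3. replace (0) with (w1 * p1 + w2 * p2 + w3 * p3 - k * (p1 * q1 + p2 * q2 + p3 * q3)) by (rewrite Hwp, Hpq; ring). ring. }
  assert (Eaq : a1 * q1 + a2 * q2 + a3 * q3 = 0).
  { unfold a1, a2, a3, k. field. lra. }
  set (c1 := p2 * q3 - p3 * q2) in *. set (c2 := p3 * q1 - p1 * q3) in *.
  set (c3 := p1 * q2 - p2 * q1) in *.
  assert (Eac : a1 * c1 + a2 * c2 + a3 * c3 = 0).
  { unfold a1, a2, a3, c1, c2, c3 in *. rewrite <- Hwc. ring. }
  assert (X1 : a2 * c3 - a3 * c2 = p1 * (a1 * q1 + a2 * q2 + a3 * q3) - q1 * (a1 * p1 + a2 * p2 + a3 * p3))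
    by (unfold c1, c2, c3; ring).
  assert (X2 : a3 * c1 - a1 * c3 = p2 * (a1 * q1 + a2 * q2 + a3 * q3) - q2 * (a1 * p1 + a2 * p2 + a3 * p3))
    by (unfold c1, c2, c3; ring).
  assert (X3 : a1 * c2 - a2 * c1 = p3 * (a1 * q1 + a2 * q2 + a3 * q3) - q3 * (a1 * p1 + a2 * p2 + a3 * p3))
    by (unfold c1, c2, c3; ring).
  rewrite Eaq, Eap in X1, X2, X3.
  assert (Lag : (a1 * a1 + a2 * a2 + a3 * a3) * (c1 * c1 + c2 * c2 + c3 * c3) =
    (a1 * c1 + a2 * c2 + a3 * c3) ^ 2 + (a2 * c3 - a3 * c2) ^ 2 + (a3 * c1 - a1 * c3) ^ 2
    + (a1 * c2 - a2 * c1) ^ 2) by ring.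
  rewrite Eac, X1, X2, X3 in Lag.
  assert (Haa : a1 * a1 + a2 * a2 + a3 * a3 = 0).
  { apply (Rmult_eq_reg_r (c1 * c1 + c2 * c2 + c3 * c3)); [|lra]. rewrite Lag. ring. }
  assert (a1 = 0) by nra. assert (a2 = 0) by nra. assert (a3 = 0) by nra.
  unfold a1, a2, a3 in *.
  assert (Hw1 : w1 = k * q1) by lra. assert (Hw2 : w2 = k * q2) by lra.
  assert (Hw3 : w3 = k * q3) by lra.
  transitivity (k * (q1 * z1 + q2 * z2 + q3 * z3)); [|reflexivity].
  rewrite Hw1, Hw2, Hw3. ring.
Qed.

Lemma smooth_pu D h : smooth2 D h -> smooth2 D (pu h).
Proof. intros H k. destruct (H (S k)) as [_ [_ [H1 _]]]. exact H1. Qed.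
Lemma smooth_pv D h : smooth2 D h -> smooth2 D (pv h).
Proof. intros H k. destruct (H (S k)) as [_ [_ [_ H1]]]. exact H1. Qed.
Lemma smooth_exu D h u v : smooth2 D h -> D u v -> ex_derive (fun t => h t v) u.
Proof. intros H Huv. destruct (H 1%nat) as [_ [H1 _]]. apply (H1 u v Huv). Qed.
Lemma smooth_exv D h u v : smooth2 D h -> D u v -> ex_derive (fun t => h u t) v.
Proof. intros H Huv. destruct (H 1%nat) as [_ [H1 _]]. apply (H1 u v Huv). Qed.
Lemma smooth_cont D h u v : smooth2 D h -> D u v -> continuity_2d_pt h u v.
Proof.
  intros H Huv. destruct (H 0%nat) as [H1 _]. apply continuity_2d_pt_filterlim.
  apply (H1 u v Huv).
Qed.

Lemma open_l2d D u v : open2 D -> D u v -> locally_2d D u v.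
Proof.
  intros HD Huv. destruct (HD u v Huv) as [e [He H]].
  exists (mkposreal e He). simpl. intros a b Ha Hb. apply H; auto.
Qed.

Lemma schwarz2 D h u v : open2 D -> smooth2 D h -> D u v -> pu (pv h) u v = pv (pu h) u v.
Proof.
  intros HD Hh Huv. unfold pu, pv.
  apply Schwarz.
  - destruct (open_l2d D u v HD Huv) as [e He]. exists e. intros a b Ha Hb.
    specialize (He a b Ha Hb).
    repeat split.
    + exact (smooth_exu D h a b Hh He).
    + exact (smooth_exv D h a b Hh He).
    + exact (smooth_exu D (pv h) a b (smooth_pv _ _ Hh) He).
    + exact (smooth_exv D (pu h) a b (smooth_pu _ _ Hh) He).
  - exact (smooth_cont D (pu (pv h)) u v (smooth_pu _ _ (smooth_pv _ _ Hh)) Huv).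
  - exact (smooth_cont D (pv (pu h)) u v (smooth_pv _ _ (smooth_pu _ _ Hh)) Huv).
Qed.

Lemma ssurf_Su D y : smooth_surf D y -> smooth_surf D (Su y).
Proof. intros [H1 [H2 H3]]. split; [|split]; apply smooth_pu; assumption. Qed.
Lemma ssurf_Sv D y : smooth_surf D y -> smooth_surf D (Sv y).
Proof. intros [H1 [H2 H3]]. split; [|split]; apply smooth_pv; assumption. Qed.

Lemma vder_v D y u v : smooth_surf D y -> D u v -> vder (fun t => y u t) v (Sv y u v).
Proof.
  intros [H1 [H2 H3]] Huv. split; [|split]; apply Derive_correct.
  - exact (smooth_exv D _ u v H1 Huv).
  - exact (smooth_exv D _ u v H2 Huv).
  - exact (smooth_exv D _ u v H3 Huv).
Qed.
Lemma vder_u D y u v : smooth_surf D y -> D u v -> vder (fun t => y t v) u (Su y u v).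
Proof.
  intros [H1 [H2 H3]] Huv. split; [|split]; apply Derive_correct.
  - exact (smooth_exu D _ u v H1 Huv).
  - exact (smooth_exu D _ u v H2 Huv).
  - exact (smooth_exu D _ u v H3 Huv).
Qed.

Lemma SuSv D y u v : open2 D -> smooth_surf D y -> D u v -> Su (Sv y) u v = Sv (Su y) u v.
Proof.
  intros HD [H1 [H2 H3]] Huv.
  change ((pu (pv (comp1 y)) u v, pu (pv (comp2 y)) u v, pu (pv (comp3 y)) u v) =
          (pv (pu (comp1 y)) u v, pv (pu (comp2 y)) u v, pv (pu (comp3 y)) u v)).
  rewrite (schwarz2 D (comp1 y) u v HD H1 Huv), (schwarz2 D (comp2 y) u v HD H2 Huv),
    (schwarz2 D (comp3 y) u v HD H3 Huv). reflexivity.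
Qed.

Lemma loc_v D u v : open2 D -> D u v -> locally v (fun t => D u t).
Proof.
  intros HD Huv. destruct (HD u v Huv) as [e [He H]].
  exists (mkposreal e He). intros t Ht. apply H; [|exact Ht].
  rewrite Rminus_eq_0, Rabs_R0; exact He.
Qed.
Lemma loc_u D u v : open2 D -> D u v -> locally u (fun t => D t v).
Proof.
  intros HD Huv. destruct (HD u v Huv) as [e [He H]].
  exists (mkposreal e He). intros t Ht. apply H; [exact Ht|].
  rewrite Rminus_eq_0, Rabs_R0; exact He.
Qed.

Lemma dot_comm a b : dot a b = dot b a.
Proof. unfold dot; ring. Qed.
Lemma un_A a b : dot (un a b) a = 0.
Proof.
  destruct a as [[a1 a2] a3]; destruct b as [[b1 b2] b3]; unfold un, dot, cross, vscale, vx, vy, vz; simpl. ring.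
Qed.
Lemma un_B a b : dot (un a b) b = 0.
Proof.
  destruct a as [[a1 a2] a3]; destruct b as [[b1 b2] b3]; unfold un, dot, cross, vscale, vx, vy, vz; simpl. ring.
Qed.
Lemma un_n a b : vnorm (cross a b) <> 0 -> dot (un a b) (un a b) = 1.
Proof.
  intros H. assert (Hp := dot_pos _ H). unfold un, vnorm in *.
  set (c := cross a b) in *. 
  assert (Hs : sqrt (dot c c) * sqrt (dot c c) = dot c c) by (apply sqrt_sqrt; lra).
  destruct c as [[c1 c2] c3]; unfold dot, vscale, vx, vy, vz in *; simpl in *.
  transitivity ((c1*c1+c2*c2+c3*c3) / (sqrt (c1 * c1 + c2 * c2 + c3 * c3) * sqrt (c1 * c1 + c2 * c2 + c3 * c3)));
   [field; exact H | rewrite Hs; field; lra].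
Qed.
Lemma cross_swap_norm a b : vnorm (cross b a) = vnorm (cross a b).
Proof. unfold vnorm. f_equal. destruct a as [[a1 a2] a3]; destruct b as [[b1 b2] b3];
  unfold dot, cross, vx, vy, vz; simpl. ring. Qed.
Lemma dot_un_swap w a b : dot w (un b a) = - dot w (un a b).
Proof.
  unfold un. rewrite cross_swap_norm. set (k := / vnorm (cross a b)).
  destruct a as [[a1 a2] a3]; destruct b as [[b1 b2] b3]; destruct w as [[w1 w2] w3];
  unfold dot, cross, vscale, vx, vy, vz; simpl. ring.
Qed.
Lemma E_pos a b : vnorm (cross a b) <> 0 -> 0 < dot a a /\ 0 < dot b b.
Proof.
  intros H. pose proof (dot_ge0 a). pose proof (dot_ge0 b). split.
  - destruct (Rle_lt_dec (dot a a) 0) as [h|h]; auto. exfalso. apply H.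
    destruct a as [[a1 a2] a3]; destruct b as [[b1 b2] b3]; unfold vnorm, dot, cross, vx, vy, vz in *; simpl in *.
    assert (a1 = 0) by nra. assert (a2 = 0) by nra. assert (a3 = 0) by nra. subst.
    replace (_ + _ + _) with 0 by ring. apply sqrt_0.
  - destruct (Rle_lt_dec (dot b b) 0) as [h|h]; auto. exfalso. apply H.
    destruct a as [[a1 a2] a3]; destruct b as [[b1 b2] b3]; unfold vnorm, dot, cross, vx, vy, vz in *; simpl in *.
    assert (b1 = 0) by nra. assert (b2 = 0) by nra. assert (b3 = 0) by nra. subst.
    replace (_ + _ + _) with 0 by ring. apply sqrt_0.
Qed.

Lemma codazzi D x u v : open2 D -> smooth_surf D x -> regular_surf D x ->
  (forall u v, D u v -> fF x u v = 0 /\ fM x u v = 0) -> D u v ->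
  is_derive (fun t => nu1 x u t) v
    ((nu2 x u v - nu1 x u v) * pv (fE x) u v / (2 * fE x u v)).
Proof.
  intros HD Hs Hreg HFM Huv.
  assert (Hs1 := ssurf_Su D x Hs). assert (Hs2 := ssurf_Sv D x Hs).
  assert (Hs11 := ssurf_Su D _ Hs1).
  assert (HAt := vder_v D (Su x) u v Hs1 Huv).
  assert (HBt := vder_v D (Sv x) u v Hs2 Huv).
  assert (HAAt := vder_v D (Su (Su x)) u v Hs11 Huv).
  assert (HAs := vder_u D (Su x) u v Hs1 Huv).
  assert (HBs := vder_u D (Sv x) u v Hs2 Huv).
  assert (HABs := vder_u D (Sv (Su x)) u v (ssurf_Sv D _ Hs1) Huv).
  assert (Hr := Hreg u v Huv).
  destruct (vder_un _ _ _ _ _ HAt HBt Hr) as [dn Hdn].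
  destruct (vder_un _ _ _ _ _ HAs HBs Hr) as [dm Hdm].
  destruct (HFM u v Huv) as [HF HM].
  assert (Sch1 : Su (Sv x) u v = Sv (Su x) u v) by exact (SuSv D x u v HD Hs Huv).
  assert (Sch2 : Su (Sv (Su x)) u v = Sv (Su (Su x)) u v) by exact (SuSv D (Su x) u v HD Hs1 Huv).
  set (A := Su x u v) in *. set (B := Sv x u v) in *.
  set (n := un A B).
  set (Xuu := Su (Su x) u v) in *. set (Xuv := Sv (Su x) u v) in *.
  set (Xvv := Sv (Sv x) u v) in *.
  set (Xuuv := Sv (Su (Su x)) u v) in *.
  rewrite Sch1 in HBs. rewrite Sch2 in HABs.
  assert (Eq1 : dot dn A + dot n Xuv = 0).
  { apply (d_zero_loc _ _ _ 0 (vder_dot _ _ _ _ _ Hdn HAt)).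
    apply filter_forall; intros; apply un_A. }
  assert (Eq2 : dot dn B + dot n Xvv = 0).
  { apply (d_zero_loc _ _ _ 0 (vder_dot _ _ _ _ _ Hdn HBt)).
    apply filter_forall; intros; apply un_B. }
  assert (Eq3 : dot dn n + dot n dn = 0).
  { apply (d_zero_loc _ _ _ 1 (vder_dot _ _ _ _ _ Hdn Hdn)).
    generalize (loc_v D u v HD Huv); apply filter_imp; intros t Ht.
    apply un_n, Hreg, Ht. }
  assert (Eq4 : dot dm A + dot n Xuu = 0).
  { apply (d_zero_loc _ _ _ 0 (vder_dot _ _ _ _ _ Hdm HAs)).
    apply filter_forall; intros; apply un_A. }
  assert (Eq5 : dot dm B + dot n Xuv = 0).
  { apply (d_zero_loc _ _ _ 0 (vder_dot _ _ _ _ _ Hdm HBs)).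
    apply filter_forall; intros; apply un_B. }
  assert (Eq6 : dot dm n + dot n dm = 0).
  { apply (d_zero_loc _ _ _ 1 (vder_dot _ _ _ _ _ Hdm Hdm)).
    generalize (loc_u D u v HD Huv); apply filter_imp; intros t Ht.
    apply un_n, Hreg, Ht. }
  assert (Eq7 : dot Xuu B + dot A Xuv = 0).
  { apply (d_zero_loc _ _ _ 0 (vder_dot _ _ _ _ _ HAs HBs)).
    generalize (loc_u D u v HD Huv); apply filter_imp; intros t Ht.
    apply (HFM t v Ht). }
  assert (Eq8 : dot Xuuv n + dot Xuv dm = 0).
  { apply (d_zero_loc _ _ _ 0 (vder_dot _ _ _ _ _ HABs Hdm)).
    generalize (loc_u D u v HD Huv); apply filter_imp; intros t Ht.
    apply (HFM t v Ht). }
  assert (Ed9 := vder_dot _ _ _ _ _ HAt HAt).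
  assert (Ed10 := vder_dot _ _ _ _ _ HAAt Hdn).
  cbv beta in Ed9, Ed10.
  change (fun s => dot (Su x u s) (Su x u s)) with (fun s => fE x u s) in Ed9.
  change (fun s => dot (Su (Su x) u s) (un (Su x u s) (Sv x u s))) with (fun s => fL x u s) in Ed10.
  fold A Xuu n in Ed9, Ed10.
  assert (HM' : dot n Xuv = 0) by (rewrite dot_comm; exact HM).
  assert (HF' : dot A B = 0) by exact HF.
  destruct (E_pos _ _ Hr) as [HEp HGp].
  assert (P1 : dot dn Xuu = dot dn B / dot B B * dot B Xuu).
  { apply (perp A B); auto.
    - fold n. rewrite (dot_comm n dn) in Eq3. lra.
    - lra. }
  assert (P2 : dot dm Xuv = dot dm A / dot A A * dot A Xuv).
  { apply (perp B A); auto.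
    - rewrite cross_swap_norm; exact Hr.
    - rewrite dot_comm; exact HF'.
    - rewrite dot_un_swap. fold n. rewrite (dot_comm n dm) in Eq6. lra.
    - lra. }
  assert (HPE : pv (fE x) u v = dot Xuv A + dot A Xuv) by exact (is_derive_unique _ _ _ Ed9).
  assert (HE : fE x u v = dot A A) by reflexivity.
  assert (HL : fL x u v = dot Xuu n) by reflexivity.
  assert (HN : fN x u v = dot Xvv n) by reflexivity.
  assert (HG : fG x u v = dot B B) by reflexivity.
  unfold nu1, nu2. rewrite HPE, HE, HL, HN, HG.
  assert (Hinv := is_derive_inv _ _ _ Ed9 ltac:(change (fE x u v <> 0); rewrite HE; lra)).
  assert (Hq := d_mult _ _ _ _ _ Ed10 Hinv).
  eapply d_val; [exact Hq|].
  cbv beta. change (un A (Sv x u v)) with n. rewrite ?HE, ?HL.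
  rewrite (dot_comm Xuu dn), P1, (dot_comm Xuv dm) in *.
  rewrite (dot_comm Xuv A).
  assert (e1 : dot dn B = - dot Xvv n) by (rewrite (dot_comm Xvv n); lra).
  assert (e2 : dot dm A = - dot Xuu n) by (rewrite (dot_comm Xuu n); lra).
  assert (e3 : dot B Xuu = - dot A Xuv) by (rewrite (dot_comm B Xuu); lra).
  assert (e4 : dot Xuuv n = - dot dm Xuv) by lra.
  rewrite e4, P2, e1, e2, e3. field. lra.
Qed.

Lemma Ck_swap k : forall D h, Ck k D h -> Ck k (fun a b => D b a) (fun a b => h b a).
Proof.
  induction k as [|k IH]; intros D h H.
  - destruct H as [Hc _]. split; [|exact I].
    intros a b Hab. apply (continuity_2d_pt_filterlim (fun a b => h b a)).
    assert (H1 : continuity_2d_pt h b a) by (apply continuity_2d_pt_filterlim; apply Hc; exact Hab).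
    intros eps. destruct (H1 eps) as [d Hd]. exists d. intros p q Hp Hq. apply Hd; auto.
  - destruct H as [Hc [Hex [Hu Hv]]]. split; [|split; [|split]].
    + intros a b Hab. apply (continuity_2d_pt_filterlim (fun a b => h b a)).
      assert (H1 : continuity_2d_pt h b a) by (apply continuity_2d_pt_filterlim; apply Hc; exact Hab).
      intros eps. destruct (H1 eps) as [d Hd]. exists d. intros p q Hp Hq. apply Hd; auto.
    + intros a b Hab. destruct (Hex b a Hab) as [E1 E2]. split; assumption.
    + exact (IH D (pv h) Hv).
    + exact (IH D (pu h) Hu).
Qed.

Definition xsw (x : surf) : surf := fun u v => x v u.

Lemma ssurf_swap D x : smooth_surf D x -> smooth_surf (fun a b => D b a) (xsw x).
Proof.
  intros [H1 [H2 H3]]. split; [|split]; intros k.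
  - exact (Ck_swap k D _ (H1 k)).
  - exact (Ck_swap k D _ (H2 k)).
  - exact (Ck_swap k D _ (H3 k)).
Qed.

Lemma nu1_sw x a b : nu1 (xsw x) a b = - nu2 x b a.
Proof.
  unfold nu1, nu2, fL, fN.
  change (dot (Sv (Sv x) b a) (un (Sv x b a) (Su x b a)) / fG x b a =
     - (dot (Sv (Sv x) b a) (un (Su x b a) (Sv x b a)) / fG x b a)).
  rewrite dot_un_swap. unfold Rdiv; ring.
Qed.
Lemma nu2_sw x a b : nu2 (xsw x) a b = - nu1 x b a.
Proof.
  unfold nu1, nu2, fL, fN.
  change (dot (Su (Su x) b a) (un (Sv x b a) (Su x b a)) / fE x b a =
     - (dot (Su (Su x) b a) (un (Su x b a) (Sv x b a)) / fE x b a)).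
  rewrite dot_un_swap. unfold Rdiv; ring.
Qed.

Lemma codazzi2 D x u v : open2 D -> smooth_surf D x -> regular_surf D x ->
  (forall u v, D u v -> fF x u v = 0 /\ fM x u v = 0) -> D u v ->
  is_derive (fun t => nu2 x t v) u
    ((nu1 x u v - nu2 x u v) * pu (fG x) u v / (2 * fG x u v)).
Proof.
  intros HD Hs Hreg HFM Huv.
  set (Ds := fun a b => D b a).
  assert (HDs : open2 Ds).
  { intros a b Hab. destruct (HD b a Hab) as [e [He H]]. exists e; split; auto.
    intros p q Hp Hq. apply H; auto. }
  assert (Hss := ssurf_swap D x Hs).
  assert (Hrs : regular_surf Ds (xsw x)).
  { intros a b Hab. change (vnorm (cross (Sv x b a) (Su x b a)) <> 0).
    rewrite cross_swap_norm. apply Hreg, Hab. }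
  assert (HFMs : forall a b, Ds a b -> fF (xsw x) a b = 0 /\ fM (xsw x) a b = 0).
  { intros a b Hab. destruct (HFM b a Hab) as [HF HM]. split.
    - change (dot (Sv x b a) (Su x b a) = 0). rewrite dot_comm; exact HF.
    - change (dot (Su (Sv x) b a) (un (Sv x b a) (Su x b a)) = 0).
      rewrite (SuSv D x b a HD Hs Hab), dot_comm, <- (dot_comm (Sv (Su x) b a)), dot_un_swap.
      change (- fM x b a = 0). rewrite HM; ring. }
  assert (H := codazzi Ds (xsw x) v u HDs Hss Hrs HFMs Huv).
  rewrite nu1_sw, nu2_sw in H.
  assert (H2 := is_derive_scal _ _ (-1) _ H).
  eapply d_val.
  - apply (is_derive_ext (fun t => -1 * nu1 (xsw x) v t)); [|exact H2].
    intros t. change (-1 * nu1 (xsw x) v t = nu2 x t v). rewrite nu1_sw. ring.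
  - change (fE (xsw x) v u) with (fG x u v).
    change (pv (fE (xsw x)) v u) with (pu (fG x) u v). field.
    destruct (E_pos _ _ (Hreg u v Huv)); unfold fG; lra.
Qed.

Lemma final_step (e P : R -> R) (t0 de dP : R) : is_derive e t0 de -> 0 < e t0 ->
  is_derive P t0 dP -> de / (2 * e t0) + dP = 0 ->
  is_derive (fun t => ln (sqrt (e t) * exp (P t))) t0 0.
Proof.
  intros He Hp HP Heq.
  assert (Hs := is_derive_sqrt _ _ _ He Hp).
  assert (Hx := d_comp exp P t0 _ _ (is_derive_exp (P t0)) HP).
  assert (Hm := d_mult _ _ _ _ _ Hs Hx).
  assert (Hsp : 0 < sqrt (e t0)) by (apply sqrt_lt_R0; auto).
  assert (Hxp : 0 < exp (P t0)) by apply exp_pos.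
  assert (Hl := d_comp ln (fun t => sqrt (e t) * exp (P t)) t0 _ _
     (is_derive_ln _ (Rmult_lt_0_compat _ _ Hsp Hxp)) Hm).
  eapply d_val; [exact Hl|]. cbv beta.
  assert (Hss : sqrt (e t0) * sqrt (e t0) = e t0) by (apply sqrt_sqrt; lra).
  set (s := sqrt (e t0)) in *. set (X := exp (P t0)) in *.
  rewrite <- Hss in Heq.
  transitivity (de / (2 * (s * s)) + dP); [field; lra | exact Heq].
Qed.

Theorem lemma4p3 (D : R -> R -> Prop) (J : R -> Prop) (x : surf)
  (f g : R -> R) (nu : R -> R -> R) (Phi Psi : R -> R) :
  open2 D -> open_interval_R J ->
  smooth_surf D x -> regular_surf D x ->
  principal_params D x -> strongly_regular D x ->
  weingarten_data D J x f g nu ->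
  (forall t, J t -> is_derive Phi t (Derive f t / (f t - g t))) ->
  (forall t, J t -> is_derive Psi t (Derive g t / (g t - f t))) ->
  (forall u v, D u v ->
     is_derive (fun t => ln (sqrt (fE x u t) * exp (Phi (nu u t)))) v 0) /\
  (forall u v, D u v ->
     is_derive (fun t => ln (sqrt (fG x t v) * exp (Psi (nu t v)))) u 0).
Proof.
  intros HD _ Hs Hreg Hpp Hsr [Hfg Hw] HPhi HPsi.
  assert (HFM : forall u v, D u v -> fF x u v = 0 /\ fM x u v = 0).
  { intros u v Huv. destruct (Hpp u v Huv) as [a [b _]]. auto. }
  split; intros u v Huv.
  - destruct (Hw u v Huv) as [HJ [Hnu1 [Hnu2 [_ [Hf Hg]]]]].
    destruct (Hfg _ HJ) as [Hexf [Hexg [Hfg0 _]]].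
    assert (Hc := codazzi D x u v HD Hs Hreg HFM Huv).
    assert (Hch := d_comp f (fun t => nu u t) v _ _ (Derive_correct _ _ Hexf) (Derive_correct _ _ Hnu2)).
    assert (Hch' : is_derive (fun t => nu1 x u t) v (pv nu u v * Derive f (nu u v))).
    { apply (is_derive_ext_loc (fun t => f (nu u t))); [|exact Hch].
      generalize (loc_v D u v HD Huv); apply filter_imp; intros t Ht.
      destruct (Hw u t Ht) as [_ [_ [_ [_ [Hf' _]]]]]. symmetry; exact Hf'. }
    assert (Heq := eq_trans (eq_sym (is_derive_unique _ _ _ Hc)) (is_derive_unique _ _ _ Hch')).
    assert (HP := d_comp Phi (fun t => nu u t) v _ _ (HPhi _ HJ) (Derive_correct _ _ Hnu2)).
    assert (HAt := vder_v D (Su x) u v (ssurf_Su D x Hs) Huv).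
    assert (HE : ex_derive (fun t => fE x u t) v).
    { eexists. exact (vder_dot _ _ _ _ _ HAt HAt). }
    destruct (E_pos _ _ (Hreg u v Huv)) as [HEp HGp].
    assert (HdE : is_derive (fun t => fE x u t) v (pv (fE x) u v)) by exact (Derive_correct _ _ HE).
    assert (HP' : is_derive (fun t => Phi (nu u t)) v (pv nu u v * (Derive f (nu u v) / (f (nu u v) - g (nu u v))))) by exact HP.
    assert (Heq' : (nu2 x u v - nu1 x u v) * pv (fE x) u v / (2 * fE x u v) = pv nu u v * Derive f (nu u v)) by exact Heq.
    apply (final_step _ _ _ _ _ HdE HEp HP').
    destruct (Hsr u v Huv) as [_ Hpos].
    rewrite <- Hf, <- Hg.
    replace (pv nu u v * (Derive f (nu u v) / (nu1 x u v - nu2 x u v))) with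
      ((pv nu u v * Derive f (nu u v)) / (nu1 x u v - nu2 x u v)) by (field; lra).
    assert (fE x u v <> 0) by (change (dot (Su x u v) (Su x u v) <> 0); lra).
    rewrite <- Heq'. field. split; lra.
  - destruct (Hw u v Huv) as [HJ [Hnu1 [Hnu2 [_ [Hf Hg]]]]].
    destruct (Hfg _ HJ) as [Hexf [Hexg [Hfg0 _]]].
    assert (Hc := codazzi2 D x u v HD Hs Hreg HFM Huv).
    assert (Hch := d_comp g (fun t => nu t v) u _ _ (Derive_correct _ _ Hexg) (Derive_correct _ _ Hnu1)).
    assert (Hch' : is_derive (fun t => nu2 x t v) u (pu nu u v * Derive g (nu u v))).
    { apply (is_derive_ext_loc (fun t => g (nu t v))); [|exact Hch].
      generalize (loc_u D u v HD Huv); apply filter_imp; intros t Ht.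
      destruct (Hw t v Ht) as [_ [_ [_ [_ [_ Hg']]]]]. symmetry; exact Hg'. }
    assert (Heq := eq_trans (eq_sym (is_derive_unique _ _ _ Hc)) (is_derive_unique _ _ _ Hch')).
    assert (HP := d_comp Psi (fun t => nu t v) u _ _ (HPsi _ HJ) (Derive_correct _ _ Hnu1)).
    assert (HBs := vder_u D (Sv x) u v (ssurf_Sv D x Hs) Huv).
    assert (HG : ex_derive (fun t => fG x t v) u).
    { eexists. exact (vder_dot _ _ _ _ _ HBs HBs). }
    destruct (E_pos _ _ (Hreg u v Huv)) as [HEp HGp].
    assert (HdG : is_derive (fun t => fG x t v) u (pu (fG x) u v)) by exact (Derive_correct _ _ HG).
    assert (HP' : is_derive (fun t => Psi (nu t v)) u (pu nu u v * (Derive g (nu u v) / (g (nu u v) - f (nu u v))))) by exact HP.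
    assert (Heq' : (nu1 x u v - nu2 x u v) * pu (fG x) u v / (2 * fG x u v) = pu nu u v * Derive g (nu u v)) by exact Heq.
    apply (final_step _ _ _ _ _ HdG HGp HP').
    destruct (Hsr u v Huv) as [_ Hpos].
    rewrite <- Hf, <- Hg.
    replace (pu nu u v * (Derive g (nu u v) / (nu2 x u v - nu1 x u v))) with
      ((pu nu u v * Derive g (nu u v)) / (nu2 x u v - nu1 x u v)) by (field; lra).
    assert (fG x u v <> 0) by (change (dot (Sv x u v) (Sv x u v) <> 0); lra).
    rewrite <- Heq'. field. split; lra.
Qed.
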